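(* Let $Seq$ be a sequent of $\mathrm{L}^{\mathrm{R}}$. Then (1) $tr_{\mathrm{R}}(Seq)\in tr'_{\mathrm{R}}(Seq)$; (2) if $H\to T\in tr'_{\mathrm{R}}(Seq)$, then $\mathrm{HL}\vdash tr_{\mathrm{R}}(Seq)$ if and only if $\mathrm{HL}\vdash H\to T$.
   Context: $\mathrm{L}^{\mathrm{R}}$: types built from primitive types by $\backslash,/,\cdot$ and unary ${}^{\mathrm{R}}$; a sequent is $A_1,\dots,A_n\to C$ with $n\ge1$. Hypergraphs: given labels with arities, a graph is $G=\langle V,E,att,lab,ext\rangle$, $att:E\to V^\circledast$ (distinct nodes), $type(lab(e))=|att(e)|$, $ext\in V^\circledast$; $type(G)=|ext|$; isomorphic graphs identified. Handle $a^\bullet$: one edge labeled $a$ attached to $v_1\dots v_n$, all external. String graph $w^\bullet$ of $w=a_1\dots a_n$: nodes $v_0..v_n$, edges $e_i$ with $att(e_i)=v_{i-1}v_i$, $lab(e_i)=a_i$, $ext=v_0v_n$. Generalized string graph $(a_1^{\delta_1}\dots a_n^{\delta_n})^\bullet$ ($\delta_i\in\{0,1\}$): same but $att(e_i)=v_iv_{i-1}$ when $\delta_i=1$. Replacement $G[e/H]$: remove $e$, insert a disjoint copy of $H$, fuse $i$-th external node of $H$ with $i$-th attachment node of $e$; relabeling $G[e:=a]$. $\mathrm{HL}$: primitive types with arities (infinitely many of each); symbol $\$$ of any arity. Types: primitives; $N\div D$ ($D$ has exactly one $\$$-edge $d_0$, others labeled by types, $type(N)=type(D)$, $type(N\div D)=type_D(d_0)$);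 $\times(M)$ ($M$ type-labeled, $type(\times(M))=type(M)$). Graph sequent $H\to A$ with $type(H)=type(A)$. Axioms $p^\bullet\to p$. Rules: $(\div\to)$: for $N\div D$, $E_D=\{d_0,\dots,d_k\}$, $e\in E_H$ labeled $N$: from $H\to A$, $H_i\to lab(d_i)$ infer $H[e/D][d_0:=N\div D][d_1/H_1,\dots,d_k/H_k]\to A$; $(\to\div)$: from $D[d_0/F]\to N$ infer $F\to N\div D$; $(\times\to)$: $e\in E_G$ labeled $\times(F)$, from $G[e/F]\to A$ infer $G\to A$; $(\to\times)$: $E_M=\{m_1,\dots,m_l\}$, from $H_i\to lab(m_i)$ infer $M[m_1/H_1,\dots,m_l/H_l]\to\times(M)$. Translations: $tr_{\mathrm{R}}(p)=p$ (primitive of type 2), $tr_{\mathrm{R}}(A/B)=tr_{\mathrm{R}}(A)\div(\$\,tr_{\mathrm{R}}(B))^\bullet$, $tr_{\mathrm{R}}(B\backslash A)=tr_{\mathrm{R}}(A)\div(tr_{\mathrm{R}}(B)\,\$)^\bullet$, $tr_{\mathrm{R}}(A\cdot B)=\times((tr_{\mathrm{R}}(A)\,tr_{\mathrm{R}}(B))^\bullet)$, $tr_{\mathrm{R}}(A^{\mathrm{R}})=\times(M_A)$ where $M_A$ has nodes $v_1,v_2$, $ext=v_1v_2$, and one edge labeled $tr_{\mathrm{R}}(A)$ with $att=v_2v_1$; $tr_{\mathrm{R}}(A_1,\dots,A_n\to A)=(tr_{\mathrm{R}}(A_1)\dots tr_{\mathrm{R}}(A_n))^\bullet\to tr_{\mathrm{R}}(A)$.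 With $[A]^0=A$ and $[A]^1=A^{\mathrm{R}}$, for $Seq=A_1,\dots,A_n\to C$ the set $tr'_{\mathrm{R}}(Seq)$ consists of all graph sequents $(tr_{\mathrm{R}}(B_1)^{\delta_1}\dots tr_{\mathrm{R}}(B_n)^{\delta_n})^\bullet\to tr_{\mathrm{R}}(C)$ for all $\delta_i\in\{0,1\}$ and types $B_i$ with $A_i=[B_i]^{\delta_i}$. *)

(* Defs.v *)
From Stdlib Require Import List Arith Bool.
Import ListNotations.

(* Hypergraphs: nodes are 0 .. gnv-1; an edge is (label, attachment);   *)
(* ext is the sequence of external nodes.                               *)
Record graph (L : Type) : Type := mkGraph {
  gnv : nat;
  gedges : list (L * list nat);
  gext : list nat }.
Arguments mkGraph {L} _ _ _.
Arguments gnv {L} _.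
Arguments gedges {L} _.
Arguments gext {L} _.

(* HL types.  HPrim x a : primitive type named x of arity a.
   Edge labels of graphs inside types are [option HLtype]; [None] is $. *)
Inductive HLtype : Type :=
| HPrim : nat -> nat -> HLtype
| HDiv : HLtype -> graph (option HLtype) -> HLtype
| HTimes : graph (option HLtype) -> HLtype.

Definition hgraph := graph (option HLtype).
Definition edge := (option HLtype * list nat)%type.

Definition is_dollar (e : edge) : bool :=
  match fst e with None => true | Some _ => false end.

Definition count_dollar (G : hgraph) : nat :=
  length (filter is_dollar (gedges G)).

Definition arity (A : HLtype) : nat :=
  match A with
  | HPrim _ a => a
  | HDiv _ D => match find is_dollar (gedges D) with
                | Some (_, att) => length att
                | None => 0 end
  | HTimes M => length (gext M)
  end.

Definition wf_graph_with (wt : HLtype -> Prop) (G : hgraph) : Prop :=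
  (forall v, In v (gext G) -> v < gnv G) /\ NoDup (gext G) /\
  (fix go (es : list edge) : Prop :=
     match es with
     | nil => True
     | (lab, att) :: es' =>
        ((forall v, In v att -> v < gnv G) /\ NoDup att /\
         match lab with
         | None => True
         | Some T => wt T /\ arity T = length att
         end) /\ go es'
     end) (gedges G).

Fixpoint wf_type (A : HLtype) : Prop :=
  match A with
  | HPrim _ _ => True
  | HDiv N D => wf_type N /\ count_dollar D = 1 /\ arity N = length (gext D) /\
      (forall v, In v (gext D) -> v < gnv D) /\ NoDup (gext D) /\
      (fix go (es : list edge) : Prop :=
         match es with
         | nil => True
         | (lab, att) :: es' =>
            ((forall v, In v att -> v < gnv D) /\ NoDup att /\
             match lab with
             | None => True
             | Some T => wf_type T /\ arity T = length att
             end) /\ go es'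
         end) (gedges D)
  | HTimes M => count_dollar M = 0 /\
      (forall v, In v (gext M) -> v < gnv M) /\ NoDup (gext M) /\
      (fix go (es : list edge) : Prop :=
         match es with
         | nil => True
         | (lab, att) :: es' =>
            ((forall v, In v att -> v < gnv M) /\ NoDup att /\
             match lab with
             | None => True
             | Some T => wf_type T /\ arity T = length att
             end) /\ go es'
         end) (gedges M)
  end.

Definition wf_graph (G : hgraph) : Prop := wf_graph_with wf_type G.

Definition wf_seq (H : hgraph) (A : HLtype) : Prop :=
  wf_graph H /\ count_dollar H = 0 /\ wf_type A /\ arity A = length (gext H).

Definition elab (G : hgraph) (i : nat) : option HLtype :=
  match nth_error (gedges G) i with Some (l, _) => l | None => None end.
Definition eatt (G : hgraph) (i : nat) : list nat :=
  match nth_error (gedges G) i with Some (_, a) => a | None => nil end.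

Fixpoint find_index (v : nat) (l : list nat) : option nat :=
  match l with
  | nil => None
  | x :: l' => if Nat.eqb v x then Some 0
               else option_map S (find_index v l')
  end.

Definition memb (u : nat) (l : list nat) : bool := existsb (Nat.eqb u) l.

Definition rank (ext : list nat) (v : nat) : nat :=
  length (filter (fun u => negb (memb u ext)) (seq 0 v)).

Definition n_internal (H : hgraph) : nat := gnv H - length (gext H).

(* node map of a copy of H inserted in place of an edge with attachment
   [att]; internal nodes are numbered from [off] on; the i-th external
   node of H is fused with the i-th attachment node *)
Definition emb (H : hgraph) (att : list nat) (off : nat) (v : nat) : nat :=
  match find_index v (gext H) with
  | Some i => nth i att 0
  | None => off + rank (gext H) v
  end.

(* simultaneous replacement of every edge i with rs i = Some H_i *)
Fixpoint subst_edges (rs : nat -> option hgraph) (i n : nat) (es : list edge)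
  : nat * list edge :=
  match es with
  | nil => (n, nil)
  | (lab, att) :: es' =>
     match rs i with
     | Some H =>
        let r := subst_edges rs (S i) (n + n_internal H) es' in
        (fst r, map (fun e => (fst e, map (emb H att n) (snd e))) (gedges H)
                 ++ snd r)
     | None =>
        let r := subst_edges rs (S i) n es' in
        (fst r, (lab, att) :: snd r)
     end
  end.

Definition subst (G : hgraph) (rs : nat -> option hgraph) : hgraph :=
  let r := subst_edges rs 0 (gnv G) (gedges G) in
  mkGraph (fst r) (snd r) (gext G).

Definition single (e : nat) (H : hgraph) : nat -> option hgraph :=
  fun i => if Nat.eqb i e then Some H else None.
Definition repl (G : hgraph) (e : nat) (H : hgraph) : hgraph :=
  subst G (single e H).

Fixpoint relab_edges (k : nat) (a : option HLtype) (es : list edge) : list edge :=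
  match es, k with
  | nil, _ => nil
  | (_, att) :: es', 0 => (a, att) :: es'
  | x :: es', S k' => x :: relab_edges k' a es'
  end.
Definition relabel (G : hgraph) (e : nat) (a : option HLtype) : hgraph :=
  mkGraph (gnv G) (relab_edges e a (gedges G)) (gext G).

(* Isomorphism of graphs, with labels compared up to the induced
   equivalence of types (isomorphic graphs are identified, also inside
   types). *)
Inductive teq : HLtype -> HLtype -> Prop :=
| teq_prim : forall x a, teq (HPrim x a) (HPrim x a)
| teq_div : forall N N' D D', teq N N' -> giso D D' -> teq (HDiv N D) (HDiv N' D')
| teq_times : forall M M', giso M M' -> teq (HTimes M) (HTimes M')
with giso : hgraph -> hgraph -> Prop :=
| giso_intro : forall (G G' : hgraph) (f s : nat -> nat),
    gnv G' = gnv G ->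
    length (gedges G') = length (gedges G) ->
    (forall x, x < gnv G -> f x < gnv G) ->
    (forall x y, x < gnv G -> y < gnv G -> f x = f y -> x = y) ->
    (forall i, i < length (gedges G) -> s i < length (gedges G)) ->
    (forall i j, i < length (gedges G) -> j < length (gedges G) -> s i = s j -> i = j) ->
    (forall i, i < length (gedges G) -> eatt G' (s i) = map f (eatt G i)) ->
    gext G' = map f (gext G) ->
    (forall i, i < length (gedges G) -> (elab G i = None <-> elab G' (s i) = None)) ->
    (forall i x y, i < length (gedges G) -> elab G i = Some x ->
                   elab G' (s i) = Some y -> teq x y) ->
    giso G G'.

Definition handle (x a : nat) : hgraph :=
  mkGraph a [(Some (HPrim x a), seq 0 a)] (seq 0 a).

Inductive hl_deriv : hgraph -> HLtype -> Prop :=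
| hl_ax : forall x a, wf_seq (handle x a) (HPrim x a) ->
    hl_deriv (handle x a) (HPrim x a)
| hl_div_l : forall (H : hgraph) (A N : HLtype) (D : hgraph) (e d0 : nat)
                    (Hs : nat -> hgraph),
    hl_deriv H A ->
    e < length (gedges H) -> elab H e = Some N ->
    d0 < length (gedges D) -> elab D d0 = None ->
    (forall i, i < length (gedges D) -> i <> d0 ->
       exists T, elab D i = Some T /\ hl_deriv (Hs i) T) ->
    let D' := subst (relabel D d0 (Some (HDiv N D)))
                    (fun i => if Nat.eqb i d0 then None else Some (Hs i)) in
    wf_seq (repl H e D') A ->
    hl_deriv (repl H e D') A
| hl_div_r : forall (F D : hgraph) (N : HLtype) (d0 : nat),
    d0 < length (gedges D) -> elab D d0 = None ->
    hl_deriv (repl D d0 F) N ->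
    wf_seq F (HDiv N D) ->
    hl_deriv F (HDiv N D)
| hl_times_l : forall (G F : hgraph) (A : HLtype) (e : nat),
    e < length (gedges G) -> elab G e = Some (HTimes F) ->
    hl_deriv (repl G e F) A ->
    wf_seq G A ->
    hl_deriv G A
| hl_times_r : forall (M : hgraph) (Hs : nat -> hgraph),
    (forall i, i < length (gedges M) ->
       exists T, elab M i = Some T /\ hl_deriv (Hs i) T) ->
    wf_seq (subst M (fun i => Some (Hs i))) (HTimes M) ->
    hl_deriv (subst M (fun i => Some (Hs i))) (HTimes M)
| hl_iso : forall (G G' : hgraph) (A A' : HLtype),
    hl_deriv G A -> giso G G' -> teq A A' -> wf_seq G' A' ->
    hl_deriv G' A'.

Inductive ltype : Type :=
| LPrim : nat -> ltype
| LLdiv : ltype -> ltype -> ltype    (* LLdiv B A = B \ A *)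
| LRdiv : ltype -> ltype -> ltype    (* LRdiv A B = A / B *)
| LProd : ltype -> ltype -> ltype
| LRev : ltype -> ltype.

Fixpoint trR (A : ltype) : HLtype :=
  match A with
  | LPrim x => HPrim x 2
  | LRdiv A B => HDiv (trR A) (mkGraph 3 [(None, [0;1]); (Some (trR B), [1;2])] [0;2])
  | LLdiv B A => HDiv (trR A) (mkGraph 3 [(Some (trR B), [0;1]); (None, [1;2])] [0;2])
  | LProd A B => HTimes (mkGraph 3 [(Some (trR A), [0;1]); (Some (trR B), [1;2])] [0;2])
  | LRev A => HTimes (mkGraph 2 [(Some (trR A), [1;0])] [0;1])
  end.

Fixpoint gs_edges (k : nat) (l : list (HLtype * bool)) : list edge :=
  match l with
  | nil => nil
  | (T, d) :: l' => (Some T, if d then [S k; k] else [k; S k]) :: gs_edges (S k) l'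
  end.
Definition gen_string (l : list (HLtype * bool)) : hgraph :=
  mkGraph (S (length l)) (gs_edges 0 l) [0; length l].

Definition trR_ant (Gamma : list ltype) : hgraph :=
  gen_string (map (fun A => (trR A, false)) Gamma).

Definition bracket (B : ltype) (d : bool) : ltype := if d then LRev B else B.

(* (H -> T) ∈ tr'_R(Gamma -> C), membership up to isomorphism *)
Definition in_trR' (Gamma : list ltype) (C : ltype) (H : hgraph) (T : HLtype) : Prop :=
  exists l : list (ltype * bool),
    map (fun p => bracket (fst p) (snd p)) l = Gamma /\
    giso (gen_string (map (fun p => (trR (fst p), snd p)) l)) H /\
    teq (trR C) T.

(* Main.v *)
Require Import Defs.
From Stdlib Require Import List Arith Lia Bool Permutation.
Import ListNotations.

Definition flipgraph (M : hgraph) (T : HLtype) : Prop :=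
  gnv M = 2 /\ exists x y, gedges M = [(Some T, [x;y])] /\ gext M = [y;x] /\ x < 2 /\ y < 2 /\ x <> y.

Definition fl (e e' : edge) : Prop :=
  exists M T u v, e = (Some (HTimes M), [u;v]) /\ flipgraph M T /\ e' = (Some T, [v;u]).

Definition OneStep (es es' : list edge) : Prop :=
  exists pre e e' post, es = pre ++ e :: post /\ es' = pre ++ e' :: post /\ fl e e'.

Definition FG (G G' : hgraph) : Prop :=
  gnv G' = gnv G /\ gext G' = gext G /\ OneStep (gedges G) (gedges G').

Definition mapatt (g : nat -> nat) (e : edge) : edge := (fst e, map g (snd e)).

Lemma fl_map g e e' : fl e e' -> fl (mapatt g e) (mapatt g e').
Proof.
  intros (M & T & u & v & -> & HM & ->). exists M, T, (g u), (g v). simpl. auto.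
Qed.

Lemma OneStep_app_l l1 l1' l2 : OneStep l1 l1' -> OneStep (l1 ++ l2) (l1' ++ l2).
Proof.
  intros (pre & e & e' & post & -> & -> & H). exists pre, e, e', (post ++ l2).
  rewrite <- !app_assoc. simpl. auto.
Qed.

Lemma OneStep_app_r l1 l2 l2' : OneStep l2 l2' -> OneStep (l1 ++ l2) (l1 ++ l2').
Proof.
  intros (pre & e & e' & post & -> & -> & H). exists (l1 ++ pre), e, e', post.
  rewrite <- !app_assoc. auto.
Qed.

Lemma OneStep_map g l l' : OneStep l l' -> OneStep (map (mapatt g) l) (map (mapatt g) l').
Proof.
  intros (pre & e & e' & post & -> & -> & H). exists (map (mapatt g) pre), (mapatt g e), (mapatt g e'), (map (mapatt g) post).
  rewrite !map_app. simpl. split; [auto|split;[auto|]]. apply fl_map; auto.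
Qed.

Lemma OneStep_app_inv l1 l2 es2 : OneStep (l1 ++ l2) es2 ->
  (exists l1', OneStep l1 l1' /\ es2 = l1' ++ l2) \/ (exists l2', OneStep l2 l2' /\ es2 = l1 ++ l2').
Proof.
  intros (pre & e & e' & post & Heq & -> & H).
  apply app_eq_app in Heq. destruct Heq as [m [[-> Hm] | [-> ->]]].
  2:{ right. exists (m ++ e' :: post). split. exists m, e, e', post. auto.
    rewrite <- app_assoc. auto. }
  - symmetry in Hm. destruct m as [|x m].
    + simpl in Hm. rewrite app_nil_r. right. exists (e' :: post). subst l2. split.
      exists [], e, e', post. auto. auto.
    + simpl in Hm. injection Hm as -> <-. left. exists (pre ++ e' :: m). split.
      exists pre, e, e', m. auto. rewrite <- app_assoc. auto.
Qed.

Lemma OneStep_cons_inv x l es2 : OneStep (x :: l) es2 ->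
  (exists x', fl x x' /\ es2 = x' :: l) \/ (exists l', OneStep l l' /\ es2 = x :: l').
Proof.
  intros (pre & e & e' & post & Heq & -> & H).
  destruct pre as [|y pre]; simpl in Heq; injection Heq as -> ->.
  - left. exists e'. auto.
  - right. exists (pre ++ e' :: post). split. exists pre, e, e', post. auto. auto.
Qed.

Lemma OneStep_map_inv g l es2 : OneStep (map (mapatt g) l) es2 ->
  exists l', OneStep l l' /\ es2 = map (mapatt g) l'.
Proof.
  intros (pre & e & e' & post & Heq & -> & H).
  apply map_eq_app in Heq. destruct Heq as (l1 & l2 & -> & <- & Hl2).
  apply map_eq_cons in Hl2. destruct Hl2 as (h & tl & -> & Hh & <-).
  destruct H as (M & T & u & v & -> & HM & ->).
  destruct h as [hl ha]. unfold mapatt in Hh. simpl in Hh. injection Hh as -> Ha.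
  destruct ha as [|a1 [|a2 [|a3 ha]]]; simpl in Ha; try discriminate.
  injection Ha as <- <-.
  exists (l1 ++ (Some T, [a2;a1]) :: tl). split.
  - exists l1, (Some (HTimes M), [a1;a2]), (Some T, [a2;a1]), tl. split; auto. split; auto.
    exists M, T, a1, a2. auto.
  - rewrite map_app. simpl. reflexivity.
Qed.

Lemma OneStep_nil es2 : ~ OneStep [] es2.
Proof. intros (pre & e & e' & post & Heq & _). destruct pre; discriminate. Qed.

Lemma subst_edges_app rs es1 : forall i n es2,
  subst_edges rs i n (es1 ++ es2) =
  (fst (subst_edges rs (i + length es1) (fst (subst_edges rs i n es1)) es2),
   snd (subst_edges rs i n es1) ++ snd (subst_edges rs (i + length es1) (fst (subst_edges rs i n es1)) es2)).
Proof.
  induction es1 as [|[lab att] es1 IH]; intros i n es2.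
  - simpl. rewrite Nat.add_0_r. destruct (subst_edges rs i n es2); reflexivity.
  - simpl. replace (i + S (length es1)) with (S i + length es1) by lia.
    destruct (rs i) as [H|]; simpl; rewrite IH; simpl; rewrite ?app_assoc; reflexivity.
Qed.

Lemma subst_edges_ext rs rs' es : forall i n,
  (forall k, i <= k < i + length es -> rs k = rs' k) ->
  subst_edges rs i n es = subst_edges rs' i n es.
Proof.
  induction es as [|[lab att] es IH]; intros i n Hk; simpl; auto.
  simpl in Hk. rewrite <- (Hk i) by lia.
  destruct (rs i); rewrite IH; auto; intros k Hk'; apply Hk; lia.
Qed.

Lemma subst_edges_none rs es : forall i n,
  (forall k, i <= k < i + length es -> rs k = None) ->
  subst_edges rs i n es = (n, es).
Proof.
  induction es as [|[lab att] es IH]; intros i n Hk; simpl; auto.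
  simpl in Hk. rewrite (Hk i) by lia. rewrite IH; auto. intros k Hk'; apply Hk; lia.
Qed.

Lemma emb_ext H H' att off : gext H' = gext H -> emb H' att off = emb H att off.
Proof. intros E. unfold emb. rewrite E. reflexivity. Qed.

Lemma n_internal_ext H H' : gext H' = gext H -> gnv H' = gnv H -> n_internal H' = n_internal H.
Proof. intros E1 E2. unfold n_internal. rewrite E1, E2. reflexivity. Qed.

Lemma subst_inv rs : forall es i n es2, OneStep (snd (subst_edges rs i n es)) es2 ->
 (exists pre e e' post, es = pre ++ e :: post /\ fl e e' /\ rs (i + length pre) = None /\
     subst_edges rs i n (pre ++ e' :: post) = (fst (subst_edges rs i n es), es2))
 \/ (exists j H H', i <= j < i + length es /\ rs j = Some H /\ FG H H' /\
     subst_edges (fun k => if Nat.eqb k j then Some H' else rs k) i n es = (fst (subst_edges rs i n es), es2)).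
Proof.
  induction es as [|[lab att] es IH]; intros i n es2 Hs.
  - simpl in Hs. exfalso. eapply OneStep_nil; eauto.
  - simpl in Hs. destruct (rs i) as [H|] eqn:Ei.
    + simpl in Hs. apply OneStep_app_inv in Hs. destruct Hs as [[l1' [Hst ->]] | [l2' [Hst ->]]].
      * apply OneStep_map_inv in Hst. destruct Hst as [hes' [Hst ->]].
        right. exists i, H, (mkGraph (gnv H) hes' (gext H)).
        split. simpl; lia. split; auto. split. unfold FG; simpl; auto.
        simpl. rewrite Nat.eqb_refl. simpl.
        rewrite (n_internal_ext H (mkGraph (gnv H) hes' (gext H))) by reflexivity.
        rewrite Ei.
        rewrite (subst_edges_ext (fun k => if Nat.eqb k i then Some (mkGraph (gnv H) hes' (gext H)) else rs k) rs).
        2:{ intros k Hk. destruct (Nat.eqb_spec k i); auto; lia. }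
        simpl. unfold mapatt. reflexivity.
      * destruct (IH (S i) (n + n_internal H) l2' Hst) as
          [(pre & e & e' & post & -> & Hfl & Hn & Heq) | (j & H0 & H' & Hj & Hrs & HFG & Heq)].
        -- left. exists ((lab,att)::pre), e, e', post. split; auto. split; auto.
           split. simpl. replace (i + S (length pre)) with (S i + length pre) by lia. auto.
           simpl. rewrite Ei. rewrite Heq. simpl. reflexivity.
        -- right. exists j, H0, H'. split. simpl; lia. split; auto. split; auto.
           simpl. destruct (Nat.eqb_spec i j). lia. rewrite Ei. rewrite Heq. reflexivity.
    + simpl in Hs. apply OneStep_cons_inv in Hs. destruct Hs as [[x' [Hfl ->]] | [l' [Hst ->]]].
      * left. exists [], (lab,att), x', es. split; auto. split; auto. split. rewrite Nat.add_0_r; auto.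
        simpl. destruct x' as [l2 a2]. rewrite Ei. reflexivity.
      * destruct (IH (S i) n l' Hst) as
          [(pre & e & e' & post & -> & Hfl & Hn & Heq) | (j & H0 & H' & Hj & Hrs & HFG & Heq)].
        -- left. exists ((lab,att)::pre), e, e', post. split; auto. split; auto.
           split. simpl. replace (i + S (length pre)) with (S i + length pre) by lia. auto.
           simpl. rewrite Ei. rewrite Heq. simpl. reflexivity.
        -- right. exists j, H0, H'. split. simpl; lia. split; auto. split; auto.
           simpl. destruct (Nat.eqb_spec i j). lia. rewrite Ei. rewrite Heq. reflexivity.
Qed.

Lemma subst_fwd_none rs i n pre e e' post : fl e e' -> rs (i + length pre) = None ->
  fst (subst_edges rs i n (pre ++ e' :: post)) = fst (subst_edges rs i n (pre ++ e :: post)) /\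
  OneStep (snd (subst_edges rs i n (pre ++ e :: post))) (snd (subst_edges rs i n (pre ++ e' :: post))).
Proof.
  intros Hfl Hn. rewrite !subst_edges_app. simpl. destruct e as [l a], e' as [l' a'].
  rewrite Hn. simpl. split; auto.
  apply OneStep_app_r. eexists [], (l,a), (l',a'), _. split; [reflexivity|split;[reflexivity|exact Hfl]].
Qed.

Lemma subst_fwd_some rs rs' es : forall i n j H H', i <= j < i + length es -> rs j = Some H -> rs' j = Some H' ->
  (forall k, k <> j -> rs k = rs' k) -> FG H H' ->
  fst (subst_edges rs' i n es) = fst (subst_edges rs i n es) /\
  OneStep (snd (subst_edges rs i n es)) (snd (subst_edges rs' i n es)).
Proof.
  induction es as [|[lab att] es IH]; intros i n j H H' Hj E E' Hk HFG; simpl in Hj. lia.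
  simpl. destruct (Nat.eqb_spec i j).
  - subst j. rewrite E, E'. simpl. destruct HFG as (Hv & He & Hst).
    rewrite (n_internal_ext H H') by auto. rewrite (emb_ext H H') by auto.
    rewrite (subst_edges_ext rs' rs). split; auto.
    apply OneStep_app_l. apply (OneStep_map (emb H att n)). auto.
    intros k Hk'. symmetry. apply Hk. lia.
  - rewrite <- (Hk i) by auto. destruct (rs i) as [H0|].
    + simpl. destruct (IH (S i) (n + n_internal H0) j H H') as [A B]; auto. lia.
      split; auto. apply OneStep_app_r; auto.
    + simpl. destruct (IH (S i) n j H H') as [A B]; auto. lia.
      split; auto. apply (OneStep_app_r [(lab,att)]); auto.
Qed.
Definition edge_ok (wt : HLtype -> Prop) (n : nat) (e : edge) : Prop :=
  (forall v, In v (snd e) -> v < n) /\ NoDup (snd e) /\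
  match fst e with None => True | Some T => wt T /\ arity T = length (snd e) end.

Lemma go_iff (wt : HLtype -> Prop) n es :
  (fix go (es : list edge) : Prop :=
     match es with
     | nil => True
     | (lab, att) :: es' =>
        ((forall v, In v att -> v < n) /\ NoDup att /\
         match lab with
         | None => True
         | Some T => wt T /\ arity T = length att
         end) /\ go es'
     end) es <-> Forall (edge_ok wt n) es.
Proof.
  induction es as [|[lab att] es IH].
  - split; auto.
  - rewrite Forall_cons_iff. rewrite <- IH. unfold edge_ok. simpl. tauto.
Qed.

Lemma wf_graph_iff G : wf_graph G <->
  (forall v, In v (gext G) -> v < gnv G) /\ NoDup (gext G) /\ Forall (edge_ok wf_type (gnv G)) (gedges G).
Proof.
  unfold wf_graph, wf_graph_with. pose proof (go_iff wf_type (gnv G) (gedges G)). tauto.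
Qed.

Lemma wf_type_div N D : wf_type (HDiv N D) <->
  wf_type N /\ count_dollar D = 1 /\ arity N = length (gext D) /\ wf_graph D.
Proof.
  rewrite wf_graph_iff. simpl. pose proof (go_iff wf_type (gnv D) (gedges D)). tauto.
Qed.

Lemma wf_type_times M : wf_type (HTimes M) <-> count_dollar M = 0 /\ wf_graph M.
Proof.
  rewrite wf_graph_iff. simpl. pose proof (go_iff wf_type (gnv M) (gedges M)). tauto.
Qed.

Lemma edge_ok_fl n e e' : fl e e' -> edge_ok wf_type n e -> edge_ok wf_type n e'.
Proof.
  intros (M & T & u & v & -> & (HM2 & x & y & HMe & HMx & Hx & Hy & Hxy) & ->) (Hr & Hnd & Hl).
  simpl in *. destruct Hl as [Hw Ha].
  apply wf_type_times in Hw. destruct Hw as [_ Hw]. apply wf_graph_iff in Hw.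
  destruct Hw as (_ & _ & Hes). rewrite HMe in Hes. inversion Hes as [|? ? Hok]. subst.
  destruct Hok as (_ & _ & Hok). simpl in Hok.
  split. intros w [<-|[<-|[]]]; apply Hr; simpl; auto.
  split. inversion Hnd as [|? ? Hni _]; subst. constructor.
  simpl. intros [Heq|[]]. apply Hni. simpl. auto.
  constructor. simpl; auto. constructor.
  auto.
Qed.

Lemma count_dollar_flip pre e e' post : fl e e' ->
  length (filter is_dollar (pre ++ e' :: post)) = length (filter is_dollar (pre ++ e :: post)).
Proof.
  intros (M & T & u & v & -> & _ & ->). rewrite !filter_app. simpl. reflexivity.
Qed.

Lemma FG_wf G G' A : FG G G' -> wf_seq G A -> wf_seq G' A.
Proof.
  intros (Hv & He & pre & e & e' & post & E & E' & Hfl) (Hw & Hc & HA & Har).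
  split; [|split; [|split]]; auto.
  - apply wf_graph_iff in Hw. apply wf_graph_iff. rewrite Hv, He, E'. rewrite E in Hw.
    destruct Hw as (H1 & H2 & H3). split; auto. split; auto.
    apply Forall_app in H3. destruct H3 as [H3 H4]. inversion H4; subst.
    apply Forall_app. split; auto. constructor; auto. eapply edge_ok_fl; eauto.
  - unfold count_dollar in *. rewrite E'. rewrite E in Hc. rewrite (count_dollar_flip _ e); auto.
  - rewrite He. auto.
Qed.

Lemma nth_error_mid {X} (pre post : list X) x : nth_error (pre ++ x :: post) (length pre) = Some x.
Proof. rewrite nth_error_app2 by lia. rewrite Nat.sub_diag. reflexivity. Qed.

Lemma nth_error_other {X} (pre post : list X) x y q : q <> length pre ->
  nth_error (pre ++ x :: post) q = nth_error (pre ++ y :: post) q.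
Proof.
  intros Hq. destruct (Nat.lt_ge_cases q (length pre)).
  - rewrite !nth_error_app1 by lia. reflexivity.
  - rewrite !nth_error_app2 by lia. destruct (q - length pre) eqn:E. lia. reflexivity.
Qed.

Lemma repl_flip G pre M T u v post : gedges G = pre ++ (Some (HTimes M), [u;v]) :: post -> flipgraph M T ->
  repl G (length pre) M = mkGraph (gnv G) (pre ++ (Some T, [v;u]) :: post) (gext G).
Proof.
  intros E (HM2 & x & y & HMe & HMx & Hx & Hy & Hxy).
  unfold repl, subst. rewrite E. rewrite subst_edges_app. unfold edge in *.
  rewrite (subst_edges_none _ pre).
  2:{ intros k Hk. unfold single. destruct (Nat.eqb_spec k (length pre)); auto. unfold edge in *. lia. }
  assert (Hs : single (length pre) M (length pre) = Some M) by (unfold single; rewrite Nat.eqb_refl; auto).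
  simpl. rewrite Hs.
  assert (Hn : n_internal M = 0). { unfold n_internal. rewrite HM2, HMx. reflexivity. }
  rewrite Hn, Nat.add_0_r.
  rewrite (subst_edges_none _ post).
  2:{ intros k Hk. unfold single. destruct (Nat.eqb_spec k (length pre)); auto. unfold edge in *. lia. }
  simpl. rewrite HMe. simpl. unfold emb. rewrite HMx. simpl.
  rewrite Nat.eqb_refl. destruct (Nat.eqb_spec x y); [lia|]. simpl. rewrite Nat.eqb_refl. reflexivity.
Qed.

Lemma hl_deriv_wf G A : hl_deriv G A -> wf_seq G A.
Proof. intros d; destruct d; auto. Qed.

Lemma elab_nth G i l a : nth_error (gedges G) i = Some (l, a) -> elab G i = l /\ eatt G i = a.
Proof. intros E. unfold elab, eatt. rewrite E. auto. Qed.
Lemma inj_surj n (s : nat -> nat) : (forall i, i < n -> s i < n) ->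
  (forall i j, i < n -> j < n -> s i = s j -> i = j) ->
  forall j, j < n -> exists i, i < n /\ s i = j.
Proof.
  intros Hr Hi j Hj.
  assert (Hnd : NoDup (map s (seq 0 n))).
  { apply FinFun.Injective_map_NoDup_in. intros x y Hx Hy. apply in_seq in Hx, Hy. apply Hi; lia. apply seq_NoDup. }
  assert (Hinc : incl (map s (seq 0 n)) (seq 0 n)).
  { intros y Hy. apply in_map_iff in Hy. destruct Hy as (x & <- & Hx). apply in_seq in Hx. apply in_seq. specialize (Hr x). lia. }
  pose proof (NoDup_length_incl (l':=seq 0 n) Hnd) as Hl.
  assert (Hin : In j (map s (seq 0 n))).
  { apply Hl. rewrite length_map. lia. exact Hinc. apply in_seq. lia. }
  apply in_map_iff in Hin. destruct Hin as (x & <- & Hx). apply in_seq in Hx. exists x. split; auto. lia.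
Qed.

Lemma nth_elab G i : i < length (gedges G) -> nth_error (gedges G) i = Some (elab G i, eatt G i).
Proof.
  intros Hi. unfold elab, eatt. destruct (nth_error (gedges G) i) as [[l a]|] eqn:E; auto.
  apply nth_error_Some in Hi. contradiction.
Qed.

Lemma Forall_idx G (P : edge -> Prop) : Forall P (gedges G) <-> forall i, i < length (gedges G) -> P (elab G i, eatt G i).
Proof.
  rewrite Forall_forall. split.
  - intros H i Hi. apply H. eapply nth_error_In. apply nth_elab. auto.
  - unfold edge in *. intros H e He. apply In_nth_error in He. destruct He as [i Hi].
    assert (Hl : i < length (gedges G)). { apply nth_error_Some. rewrite Hi. discriminate. }
    pose proof (nth_elab G i Hl) as Hn. rewrite Hi in Hn. injection Hn as ->. auto.
Qed.

Definition giso_refl_aux (G : hgraph) : (forall i x, elab G i = Some x -> teq x x) -> giso G G.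
Proof.
  intros H. apply (giso_intro G G (fun x => x) (fun i => i)); auto.
  - intros. rewrite map_id. auto.
  - rewrite map_id. auto.
  - intros. tauto.
  - intros i x y _ H1 H2. rewrite H1 in H2. injection H2 as <-. eauto.
Defined.

Definition lab_ok (e : edge) : Prop := match fst e with Some T => teq T T | None => True end.

Lemma lab_ok_elab G : Forall lab_ok (gedges G) -> forall i x, elab G i = Some x -> teq x x.
Proof.
  intros HF i x Hx. unfold elab in Hx. destruct (nth_error (gedges G) i) as [[l a]|] eqn:E; [|discriminate].
  apply nth_error_In in E. rewrite Forall_forall in HF. apply HF in E. unfold lab_ok in E. simpl in E. subst. auto.
Qed.

Fixpoint teq_refl (A : HLtype) : teq A A :=
  match A with
  | HPrim x a => teq_prim x a
  | HDiv N D => teq_div N N D D (teq_refl N) (giso_refl_aux D (lab_ok_elab D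
      (match D as D0 return Forall lab_ok (gedges D0) with mkGraph n es ext =>
        (fix go (es : list edge) : Forall lab_ok es :=
          match es as es0 return Forall lab_ok es0 with
          | nil => Forall_nil lab_ok
          | e :: es' => @Forall_cons _ lab_ok e es'
              (match e as e0 return lab_ok e0 with (o, a) =>
                 match o as o0 return lab_ok (o0, a) with Some T => teq_refl T | None => I end end)
              (go es')
          end) es end)))
  | HTimes M => teq_times M M (giso_refl_aux M (lab_ok_elab M
      (match M as D0 return Forall lab_ok (gedges D0) with mkGraph n es ext =>
        (fix go (es : list edge) : Forall lab_ok es :=
          match es as es0 return Forall lab_ok es0 with
          | nil => Forall_nil lab_ok
          | e :: es' => @Forall_cons _ lab_ok e es'
              (match e as e0 return lab_ok e0 with (o, a) =>
                 match o as o0 return lab_ok (o0, a) with Some T => teq_refl T | None => I end end)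
              (go es')
          end) es end)))
  end.

Lemma giso_refl G : giso G G.
Proof. apply giso_refl_aux. intros. apply teq_refl. Qed.
Definition isNoneb (o : option HLtype) : bool := match o with None => true | Some _ => false end.

Lemma filter_len_map {X Y} (p : Y -> bool) (g : X -> Y) l :
  length (filter p (map g l)) = length (filter (fun x => p (g x)) l).
Proof. induction l; simpl; auto. destruct (p (g a)); simpl; auto. Qed.

Lemma count_idx_gen (l : list edge) : length (filter is_dollar l) =
  length (filter (fun i => match nth_error l i with Some (o,_) => isNoneb o | None => true end) (seq 0 (length l))).
Proof.
  induction l as [|[o a] l IH]; simpl; auto.
  rewrite <- seq_shift.
  destruct o; simpl; rewrite filter_len_map; simpl; rewrite IH; auto.
Qed.

Lemma count_dollar_idx G : count_dollar G = length (filter (fun i => isNoneb (elab G i)) (seq 0 (length (gedges G)))).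
Proof.
  unfold count_dollar. rewrite count_idx_gen. f_equal. apply filter_ext. intros i. unfold elab. unfold edge in *.
  destruct (nth_error (gedges G) i) as [[o a]|]; auto.
Qed.

Lemma perm_filter_len (p : nat -> bool) l l' : Permutation l l' -> length (filter p l) = length (filter p l').
Proof.
  induction 1; simpl; auto.
  - destruct (p x); simpl; auto.
  - destruct (p x), (p y); simpl; auto.
  - congruence.
Qed.

Lemma perm_seq n s : (forall i, i < n -> s i < n) ->
  (forall i j, i < n -> j < n -> s i = s j -> i = j) -> Permutation (map s (seq 0 n)) (seq 0 n).
Proof.
  intros Hr Hi. apply NoDup_Permutation.
  - apply FinFun.Injective_map_NoDup_in. intros x y Hx Hy. apply in_seq in Hx, Hy. apply Hi; lia. apply seq_NoDup.
  - apply seq_NoDup.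
  - intros y. rewrite in_map_iff, in_seq. split.
    + intros (x & <- & Hx). apply in_seq in Hx. specialize (Hr x). lia.
    + intros Hy. destruct (inj_surj n s Hr Hi y) as (x & Hx & <-). lia. exists x. split; auto. apply in_seq. lia.
Qed.

Lemma count_iso G G' s : length (gedges G') = length (gedges G) ->
  (forall i, i < length (gedges G) -> s i < length (gedges G)) ->
  (forall i j, i < length (gedges G) -> j < length (gedges G) -> s i = s j -> i = j) ->
  (forall i, i < length (gedges G) -> (elab G i = None <-> elab G' (s i) = None)) ->
  count_dollar G' = count_dollar G.
Proof.
  intros Hl Hr Hi Hlab. rewrite !count_dollar_idx. rewrite Hl.
  rewrite <- (perm_filter_len _ _ _ (perm_seq _ s Hr Hi)).
  rewrite filter_len_map. f_equal. apply filter_ext_in. intros i Hin. apply in_seq in Hin.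
  specialize (Hlab i ltac:(lia)).
  destruct (elab G i), (elab G' (s i)); simpl; auto.
  - destruct Hlab as [_ H]. specialize (H eq_refl). discriminate.
  - destruct Hlab as [H _]. specialize (H eq_refl). discriminate.
Qed.

Lemma dollar_unique G i i' : count_dollar G = 1 -> i < length (gedges G) -> i' < length (gedges G) ->
  elab G i = None -> elab G i' = None -> i = i'.
Proof.
  intros Hc Hi Hi' E E'. destruct (Nat.eq_dec i i') as [|Hne]; auto. exfalso.
  rewrite count_dollar_idx in Hc.
  assert (Hle : length [i; i'] <= length (filter (fun i => isNoneb (elab G i)) (seq 0 (length (gedges G))))).
  { apply NoDup_incl_length.
    - constructor. simpl. intros [H|[]]; auto. constructor. simpl; auto. constructor.
    - intros x [<-|[<-|[]]]; apply filter_In; split; try (apply in_seq; lia).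
      rewrite E; auto. rewrite E'; auto. }
  simpl in Hle. lia.
Qed.

Definition dollar_len (G : hgraph) : nat :=
  match find is_dollar (gedges G) with Some (_, att) => length att | None => 0 end.

Lemma find_dollar_idx G : count_dollar G = 1 ->
  exists i, i < length (gedges G) /\ elab G i = None /\ dollar_len G = length (eatt G i).
Proof.
  intros Hc. unfold dollar_len. destruct (find is_dollar (gedges G)) as [[o a]|] eqn:E.
  - apply find_some in E. destruct E as [Hin Hd].
    apply In_nth_error in Hin. destruct Hin as [i Hi].
    assert (Hl : i < length (gedges G)). { apply nth_error_Some. unfold edge in *. rewrite Hi. discriminate. }
    apply elab_nth in Hi. destruct Hi as [H1 H2]. exists i. split; auto. rewrite H1, H2.
    destruct o; simpl in Hd; [discriminate|]. auto.
  - exfalso. unfold count_dollar in Hc.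
    destruct (filter is_dollar (gedges G)) as [|x r] eqn:F; simpl in Hc. discriminate.
    assert (Hx : In x (filter is_dollar (gedges G))). { rewrite F. simpl; auto. }
    apply filter_In in Hx. destruct Hx as [Hx Hd].
    rewrite (find_none _ _ E x Hx) in Hd. discriminate.
Qed.

Scheme teq_mut := Minimality for teq Sort Prop with giso_mut := Minimality for giso Sort Prop.
Combined Scheme teq_giso_mut from teq_mut, giso_mut.

Lemma NoDup_map_in (f : nat -> nat) n l : (forall x y, x < n -> y < n -> f x = f y -> x = y) ->
  (forall v, In v l -> v < n) -> NoDup l -> NoDup (map f l).
Proof.
  intros Hi Hr Hnd. apply FinFun.Injective_map_NoDup_in; auto.
Qed.

Lemma wf_transfer :
  (forall A A', teq A A' -> wf_type A -> wf_type A' /\ arity A' = arity A) /\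
  (forall G G', giso G G' -> wf_graph G -> wf_graph G' /\ count_dollar G' = count_dollar G /\
      length (gext G') = length (gext G) /\ (count_dollar G = 1 -> dollar_len G' = dollar_len G)).
Proof.
  apply teq_giso_mut.
  - intros. split; auto.
  - intros N N' D D' _ IHN _ IHD Hw. apply wf_type_div in Hw. destruct Hw as (HN & Hc & Ha & HD).
    destruct (IHN HN) as [HN' Ha']. destruct (IHD HD) as (HD' & Hc' & Hl & Hdl).
    split. apply wf_type_div. split; auto. split. lia. split; auto. lia.
    change (dollar_len D' = dollar_len D). auto.
  - intros M M' _ IH Hw. apply wf_type_times in Hw. destruct Hw as (Hc & HM).
    destruct (IH HM) as (HM' & Hc' & Hl & _). split. apply wf_type_times. split; auto. lia.
    simpl. auto.
  - intros G G' f s Hv Hl Hfr Hfi Hsr Hsi Hatt Hext Hlab _ IH Hw.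
    assert (Hcnt : count_dollar G' = count_dollar G) by (eapply count_iso; eauto).
    pose proof Hw as Hw0.
    apply wf_graph_iff in Hw. destruct Hw as (Her & Hend & Hes).
    rewrite Forall_idx in Hes.
    split; [|split; [auto|split]].
    + apply wf_graph_iff. rewrite Hext, Hv. split; [|split].
      * intros v Hv'. apply in_map_iff in Hv'. destruct Hv' as (w & <- & Hw). auto.
      * eapply NoDup_map_in; eauto.
      * apply Forall_idx. intros j Hj. rewrite Hl in Hj.
        destruct (inj_surj _ s Hsr Hsi j Hj) as (i & Hi & <-).
        destruct (Hes i Hi) as (Har & Hand & Halab). simpl in *.
        rewrite Hatt by auto. split; [|split].
        -- intros v Hv'. apply in_map_iff in Hv'. destruct Hv' as (w & <- & Hw). auto.
        -- eapply NoDup_map_in; eauto.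
        -- simpl. destruct (elab G' (s i)) as [y|] eqn:Ey; auto.
           destruct (elab G i) as [x|] eqn:Ex.
           ++ destruct Halab as [Hx Hax]. destruct (IH i x y Hi Ex Ey Hx) as [Hy Hay].
              split; auto. simpl. rewrite length_map. lia.
           ++ exfalso. apply Hlab in Ex; [|auto]. rewrite Ex in Ey. discriminate.
    + rewrite Hext, length_map. auto.
    + intros Hc1. destruct (find_dollar_idx G Hc1) as (i0 & Hi0 & E0 & D0).
      destruct (find_dollar_idx G') as (j & Hj & Ej & Dj). lia.
      rewrite D0, Dj. rewrite Hl in Hj.
      destruct (inj_surj _ s Hsr Hsi j Hj) as (i & Hi & <-).
      assert (elab G i = None) by (apply Hlab; auto).
      assert (i = i0) by (eapply dollar_unique; eauto). subst i.
      rewrite Hatt by auto. apply length_map.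
Qed.
Definition finv (n : nat) (f : nat -> nat) (y : nat) : nat :=
  match find (fun x => Nat.eqb (f x) y) (seq 0 n) with Some x => x | None => 0 end.

Lemma finv_spec n f : (forall x, x < n -> f x < n) ->
  (forall x y, x < n -> y < n -> f x = f y -> x = y) ->
  (forall y, y < n -> finv n f y < n /\ f (finv n f y) = y) /\
  (forall x, x < n -> finv n f (f x) = x).
Proof.
  intros Hr Hi.
  assert (H1 : forall y, y < n -> finv n f y < n /\ f (finv n f y) = y).
  { intros y Hy. destruct (inj_surj n f Hr Hi y Hy) as (x & Hx & Hfx).
    unfold finv. destruct (find (fun x => Nat.eqb (f x) y) (seq 0 n)) as [x'|] eqn:E.
    - apply find_some in E. destruct E as [Hin Heq]. apply in_seq in Hin. apply Nat.eqb_eq in Heq. split; auto. lia.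
    - exfalso. assert (Hin : In x (seq 0 n)) by (apply in_seq; lia).
      pose proof (find_none _ _ E x Hin). simpl in H. rewrite Hfx, Nat.eqb_refl in H. discriminate. }
  split; auto. intros x Hx. destruct (H1 (f x) (Hr x Hx)) as [A B]. apply Hi; auto.
Qed.

Lemma sym_all :
  (forall A A', teq A A' -> wf_type A -> teq A' A) /\
  (forall G G', giso G G' -> wf_graph G -> giso G' G).
Proof.
  apply teq_giso_mut.
  - intros. constructor.
  - intros N N' D D' _ IHN _ IHD Hw. apply wf_type_div in Hw. destruct Hw as (HN & _ & _ & HD).
    constructor; auto.
  - intros M M' _ IH Hw. apply wf_type_times in Hw. destruct Hw as (_ & HM). constructor; auto.
  - intros G G' f s Hv Hl Hfr Hfi Hsr Hsi Hatt Hext Hlab _ IH Hw.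
    apply wf_graph_iff in Hw. destruct Hw as (Her & Hend & Hes). rewrite Forall_idx in Hes.
    destruct (finv_spec _ f Hfr Hfi) as [Fa Fb].
    destruct (finv_spec _ s Hsr Hsi) as [Sa Sb].
    set (n := gnv G) in *. set (m := length (gedges G)) in *.
    apply (giso_intro G' G (finv n f) (finv m s)).
    + auto.
    + auto.
    + rewrite Hv. intros x Hx. apply Fa; auto.
    + rewrite Hv. intros x y Hx Hy E. destruct (Fa x Hx) as [_ Ex]. destruct (Fa y Hy) as [_ Ey]. congruence.
    + rewrite Hl. intros x Hx. apply Sa; auto.
    + rewrite Hl. intros x y Hx Hy E. destruct (Sa x Hx) as [_ Ex]. destruct (Sa y Hy) as [_ Ey]. congruence.
    + rewrite Hl. intros j Hj. destruct (Sa j Hj) as [Hk Hsk]. set (k := finv m s j) in *.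
      rewrite <- Hsk. rewrite Hatt by auto. rewrite map_map.
      destruct (Hes k Hk) as (Har & _ & _). simpl in Har.
      rewrite <- (map_id (eatt G k)) at 1. apply map_ext_in. intros a Ha. symmetry. apply Fb. auto.
    + rewrite Hext, map_map. rewrite <- (map_id (gext G)) at 1. apply map_ext_in. intros a Ha. symmetry. apply Fb. auto.
    + rewrite Hl. intros j Hj. destruct (Sa j Hj) as [Hk Hsk]. rewrite <- Hsk at 1.
      specialize (Hlab _ Hk). tauto.
    + rewrite Hl. intros j x y Hj Ex Ey. destruct (Sa j Hj) as [Hk Hsk]. rewrite <- Hsk in Ex.
      destruct (Hes _ Hk) as (_ & _ & Hlb). simpl in Hlb. rewrite Ey in Hlb. destruct Hlb as [Hwy _].
      eapply IH; eauto.
Qed.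

Lemma teq_sym A A' : teq A A' -> wf_type A -> teq A' A.
Proof. apply sym_all. Qed.
Lemma giso_sym G G' : giso G G' -> wf_graph G -> giso G' G.
Proof. apply sym_all. Qed.
Lemma hl_ind' (P : hgraph -> HLtype -> Prop)
 (Hax : forall x a, wf_seq (handle x a) (HPrim x a) -> P (handle x a) (HPrim x a))
 (Hdivl : forall (H : hgraph) (A N : HLtype) (D : hgraph) (e d0 : nat) (Hs : nat -> hgraph),
    hl_deriv H A -> P H A ->
    e < length (gedges H) -> elab H e = Some N ->
    d0 < length (gedges D) -> elab D d0 = None ->
    (forall i, i < length (gedges D) -> i <> d0 ->
       exists T, elab D i = Some T /\ hl_deriv (Hs i) T /\ P (Hs i) T) ->
    let D' := subst (relabel D d0 (Some (HDiv N D)))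
                    (fun i => if Nat.eqb i d0 then None else Some (Hs i)) in
    wf_seq (repl H e D') A -> P (repl H e D') A)
 (Hdivr : forall (F D : hgraph) (N : HLtype) (d0 : nat),
    d0 < length (gedges D) -> elab D d0 = None ->
    hl_deriv (repl D d0 F) N -> P (repl D d0 F) N ->
    wf_seq F (HDiv N D) -> P F (HDiv N D))
 (Htl : forall (G F : hgraph) (A : HLtype) (e : nat),
    e < length (gedges G) -> elab G e = Some (HTimes F) ->
    hl_deriv (repl G e F) A -> P (repl G e F) A ->
    wf_seq G A -> P G A)
 (Htr : forall (M : hgraph) (Hs : nat -> hgraph),
    (forall i, i < length (gedges M) ->
       exists T, elab M i = Some T /\ hl_deriv (Hs i) T /\ P (Hs i) T) ->
    wf_seq (subst M (fun i => Some (Hs i))) (HTimes M) ->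
    P (subst M (fun i => Some (Hs i))) (HTimes M))
 (Hiso : forall (G G' : hgraph) (A A' : HLtype),
    hl_deriv G A -> P G A -> giso G G' -> teq A A' -> wf_seq G' A' -> P G' A') :
 forall G A, hl_deriv G A -> P G A.
Proof.
  fix IH 3. intros G A d. destruct d.
  - apply Hax; auto.
  - apply Hdivl; auto.
    intros i Hi Hne. match goal with Hp : forall i, _ -> _ -> exists T, _ |- _ => destruct (Hp i Hi Hne) as [T [HT Hd]] end.
    exists T. split; [exact HT|split; [exact Hd| exact (IH _ _ Hd)]].
  - eapply Hdivr; eauto.
  - eapply Htl; eauto.
  - apply Htr; auto.
    intros i Hi. match goal with Hp : forall i, _ -> exists T, _ |- _ => destruct (Hp i Hi) as [T [HT Hd]] end.
    exists T. split; [exact HT|split; [exact Hd| exact (IH _ _ Hd)]].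
  - eapply Hiso; eauto.
Qed.

Lemma elab_other G G' pre x y post i : gedges G = pre ++ x :: post -> gedges G' = pre ++ y :: post ->
  i <> length pre -> elab G' i = elab G i /\ eatt G' i = eatt G i.
Proof.
  intros E E' Hi. unfold elab, eatt. unfold edge in *. rewrite E, E'.
  rewrite (nth_error_other pre post y x i Hi). auto.
Qed.

Lemma elab_mid G pre x post : gedges G = pre ++ x :: post -> elab G (length pre) = fst x /\ eatt G (length pre) = snd x.
Proof.
  intros E. unfold elab, eatt. unfold edge in *. rewrite E. rewrite nth_error_mid. destruct x; auto.
Qed.

Lemma graph_eta (G : hgraph) : G = mkGraph (gnv G) (gedges G) (gext G).
Proof. destruct G; reflexivity. Qed.

Lemma length_relab k a es : length (relab_edges k a es) = length es.
Proof.
  revert k. induction es as [|[l t] es IH]; intros k; destruct k; simpl; auto.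
Qed.

Lemma nth_relab k a es : nth_error (relab_edges k a es) k = option_map (fun x => (a, snd x)) (nth_error es k).
Proof.
  revert k. induction es as [|[l t] es IH]; intros k; destruct k; simpl; auto.
Qed.

Lemma flip_iso M0 M T : giso M0 M -> wf_graph M0 -> flipgraph M T -> exists T0, flipgraph M0 T0 /\ teq T0 T.
Proof.
  intros Hiso Hw (HM2 & x & y & HMe & HMx & Hx & Hy & Hxy).
  destruct Hiso as [M0 M f s Hv Hl Hfr Hfi Hsr Hsi Hatt Hext Hlab Hteql].
  rewrite HMe in Hl. simpl in Hl.
  destruct (gedges M0) as [|[l0 a0] [|e1 es]] eqn:E0; simpl in Hl; try discriminate.
  assert (Hs0 : s 0 = 0). { specialize (Hsr 0). simpl in Hsr. lia. }
  assert (Hlt : 0 < 1) by lia.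
  specialize (Hlab 0 Hlt). specialize (Hatt 0 Hlt). specialize (Hteql 0).
  rewrite Hs0 in Hlab, Hatt, Hteql. unfold elab, eatt in *. rewrite HMe, E0 in *. simpl in *.
  destruct l0 as [T0|]; [|destruct Hlab as [Hc _]; specialize (Hc eq_refl); discriminate].
  specialize (Hteql T0 T Hlt eq_refl eq_refl).
  destruct a0 as [|x0 [|y0 [|z a0]]]; simpl in Hatt; try discriminate. injection Hatt as Hfx Hfy.
  rewrite HMx in Hext. destruct (gext M0) as [|p [|q [|r ex]]] eqn:Ex; simpl in Hext; try discriminate.
  injection Hext as Hfp Hfq.
  apply wf_graph_iff in Hw. rewrite E0, Ex in Hw. destruct Hw as (Her & Hend & Hes).
  inversion Hes as [|? ? Hok]. subst. destruct Hok as (Har & _). simpl in Har.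
  assert (HM02 : gnv M0 = 2) by lia.
  assert (x0 < 2 /\ y0 < 2) as [Hx0 Hy0]. { rewrite HM02 in Har. split; apply Har; auto. }
  assert (p < 2 /\ q < 2) as [Hp Hq]. { rewrite HM02 in Her. split; apply Her; simpl; auto. }
  rewrite HM02 in Hfi.
  assert (p = y0) by (apply Hfi; auto; congruence).
  assert (q = x0) by (apply Hfi; auto; congruence). subst p q.
  exists T0. split; auto. split. lia. exists x0, y0.
  assert (x0 <> y0) by (intros <-; apply Hxy; congruence). auto.
Qed.

Lemma inversion : forall G A, hl_deriv G A -> forall G', FG G G' -> hl_deriv G' A.
Proof.
  apply (hl_ind' (fun G A => forall G', FG G G' -> hl_deriv G' A)).
  -
    intros x a _ G' (Hv & Hx & Hst). simpl in Hst. apply OneStep_cons_inv in Hst.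
    destruct Hst as [[x' [(M & T & u & v & Heq & _) _]] | [l' [Hst _]]].
    + discriminate.
    + exfalso. eapply OneStep_nil; eauto.
  -
    intros H A N D e d0 Hs dH IHH He HeN Hd0 Hd0N Hprem D' Hwf G' HFG.
    pose proof (FG_wf _ _ _ HFG Hwf) as Hwf'.
    destruct HFG as (Hv & Hx & Hst). unfold repl, subst in Hst, Hv, Hx. simpl in Hst, Hv, Hx.
    apply subst_inv in Hst.
    destruct Hst as [(pre & x & x' & post & E & Hfl & Hn & Hsub) | (j & H0 & H1 & Hj & Hrs & HFG0 & Hsub)].
    + set (H' := mkGraph (gnv H) (pre ++ x' :: post) (gext H)).
      assert (Hne : e <> length pre).
      { intros ->. unfold single in Hn. simpl in Hn. rewrite Nat.eqb_refl in Hn. discriminate. }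
      assert (HFGH : FG H H').
      { split; auto. split; auto. simpl. exists pre, x, x', post. auto. }
      specialize (IHH H' HFGH).
      assert (HeN' : elab H' e = Some N).
      { destruct (elab_other H H' pre x x' post e E eq_refl Hne) as [-> _]. auto. }
      assert (He' : e < length (gedges H')).
      { simpl. rewrite E in He. rewrite !length_app in *. simpl in *. lia. }
      assert (Heq : repl H' e D' = G').
      { unfold repl, subst. simpl. unfold edge in *. rewrite Hsub. rewrite (graph_eta G'). simpl.
        rewrite Hv, Hx. reflexivity. }
      rewrite <- Heq in Hwf' |- *.
      exact (hl_div_l H' A N D e d0 Hs IHH He' HeN' Hd0 Hd0N
               (fun i Hi Hne => match Hprem i Hi Hne with ex_intro _ T (conj A1 (conj A2 _)) => ex_intro _ T (conj A1 A2) end) Hwf').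
    + assert (j = e /\ H0 = D') as [-> ->].
      { unfold single in Hrs. destruct (Nat.eqb_spec j e); [|discriminate]. injection Hrs; auto. }
      destruct HFG0 as (Hv1 & Hx1 & Hst1). unfold D', subst in Hst1, Hv1, Hx1. simpl in Hst1, Hv1, Hx1.
      apply subst_inv in Hst1.
      destruct Hst1 as [(pre & x & x' & post & E & Hfl & Hn & Hsub1) | (j2 & H2 & H3 & Hj2 & Hrs2 & HFG2 & Hsub2)].
      * exfalso. simpl in Hn. destruct (Nat.eqb_spec (length pre) d0) as [Hd|]; [|discriminate].
        pose proof (nth_relab d0 (Some (HDiv N D)) (gedges D)) as Hr.
        unfold edge in *. rewrite E in Hr. rewrite <- Hd in Hr. rewrite nth_error_mid in Hr.
        destruct (nth_error (gedges D) (length pre)); simpl in Hr; [|discriminate].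
        injection Hr as Hr. destruct Hfl as (M & T & u & v & -> & _ & _). simpl in Hr. discriminate.
      * assert (j2 <> d0 /\ H2 = Hs j2) as [Hjd ->].
        { destruct (Nat.eqb_spec j2 d0); [discriminate|]. injection Hrs2; auto. }
        simpl in Hj2. rewrite length_relab in Hj2.
        destruct (Hprem j2 ltac:(unfold edge in *; lia) Hjd) as (T2 & ET2 & dT2 & IHT2).
        specialize (IHT2 H3 HFG2).
        set (Hs2 := fun i => if Nat.eqb i j2 then H3 else Hs i).
        assert (Hprem2 : forall i, i < length (gedges D) -> i <> d0 -> exists T, elab D i = Some T /\ hl_deriv (Hs2 i) T).
        { intros i Hi Hne. unfold Hs2. destruct (Nat.eqb_spec i j2).
          - subst. eauto.
          - destruct (Hprem i Hi Hne) as (T & A1 & A2 & _). eauto. }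
        set (D'' := subst (relabel D d0 (Some (HDiv N D))) (fun i => if Nat.eqb i d0 then None else Some (Hs2 i))).
        assert (ED'' : D'' = H1).
        { unfold D'', subst. simpl.
          rewrite (subst_edges_ext _ (fun k => if Nat.eqb k j2 then Some H3 else (if Nat.eqb k d0 then None else Some (Hs k)))).
          2:{ intros k _. unfold Hs2. destruct (Nat.eqb_spec k d0), (Nat.eqb_spec k j2); subst; auto. lia. }
          unfold edge in *. rewrite Hsub2. rewrite (graph_eta H1). simpl. rewrite Hv1, Hx1. reflexivity. }
        assert (Heq : repl H e D'' = G').
        { unfold repl, subst. simpl.
          rewrite (subst_edges_ext _ (fun k => if Nat.eqb k e then Some H1 else single e D' k)).
          2:{ intros k _. unfold single. destruct (Nat.eqb_spec k e); subst; auto. }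
          unfold edge in *. rewrite Hsub. rewrite (graph_eta G'). simpl. rewrite Hv, Hx. reflexivity. }
        rewrite <- Heq in Hwf' |- *.
        exact (hl_div_l H A N D e d0 Hs2 dH He HeN Hd0 Hd0N Hprem2 Hwf').
  -
    intros F D N d0 Hd0 Hd0N dP IHP Hwf G' HFG.
    pose proof (FG_wf _ _ _ HFG Hwf) as Hwf'.
    apply hl_div_r with d0; auto. apply IHP.
    destruct (subst_fwd_some (single d0 F) (single d0 G') (gedges D) 0 (gnv D) d0 F G') as [Hf Hs].
    + unfold edge in *; lia.
    + unfold single. rewrite Nat.eqb_refl. auto.
    + unfold single. rewrite Nat.eqb_refl. auto.
    + intros k Hk. unfold single. destruct (Nat.eqb_spec k d0); auto. lia.
    + auto.
    + unfold repl, subst. split; simpl; auto.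
  -
    intros G F A e He HeF dP IHP Hwf G' HFG.
    pose proof (FG_wf _ _ _ HFG Hwf) as Hwf'.
    destruct HFG as (Hv & Hx & pre & x & x' & post & E & E' & Hfl).
    destruct (Nat.eq_dec e (length pre)) as [->|Hne].
    + destruct (elab_mid G pre x post E) as [Hl _]. unfold edge in *. rewrite HeF in Hl.
      destruct Hfl as (M & T & u & v & -> & HfM & ->). simpl in Hl. injection Hl as ->.
      rewrite (repl_flip G pre _ T u v post E HfM) in dP.
      rewrite (graph_eta G'). rewrite Hv, Hx, E'. exact dP.
    + assert (HeF' : elab G' e = Some (HTimes F)).
      { destruct (elab_other G G' pre x x' post e E E' Hne) as [-> _]. auto. }
      assert (He' : e < length (gedges G')).
      { rewrite E in He. rewrite E'. rewrite !length_app in *. simpl in *. lia. }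
      apply hl_times_l with F e; auto. apply IHP.
      destruct (subst_fwd_none (single e F) 0 (gnv G) pre x x' post Hfl) as [Hf Hs].
      { unfold single. simpl. destruct (Nat.eqb_spec (length pre) e); auto. lia. }
      unfold repl, subst. unfold edge in *. rewrite E, E', Hv, Hx. split; simpl; auto.
  -
    intros M Hs Hprem Hwf G' HFG.
    pose proof (FG_wf _ _ _ HFG Hwf) as Hwf'.
    destruct HFG as (Hv & Hx & Hst). unfold subst in Hst, Hv, Hx. simpl in Hst, Hv, Hx.
    apply subst_inv in Hst.
    destruct Hst as [(pre & x & x' & post & E & Hfl & Hn & Hsub) | (j & H0 & H1 & Hj & Hrs & HFG0 & Hsub)].
    + discriminate.
    + injection Hrs as <-. simpl in Hj.
      destruct (Hprem j ltac:(unfold edge in *; lia)) as (T & ET & dT & IHT).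
      specialize (IHT H1 HFG0).
      set (Hs2 := fun i => if Nat.eqb i j then H1 else Hs i).
      assert (Hprem2 : forall i, i < length (gedges M) -> exists T, elab M i = Some T /\ hl_deriv (Hs2 i) T).
      { intros i Hi. unfold Hs2. destruct (Nat.eqb_spec i j).
        - subst. eauto.
        - destruct (Hprem i Hi) as (T' & A1 & A2 & _). eauto. }
      assert (Heq : subst M (fun i => Some (Hs2 i)) = G').
      { unfold subst. simpl.
        rewrite (subst_edges_ext _ (fun k => if Nat.eqb k j then Some H1 else Some (Hs k))).
        2:{ intros k _. unfold Hs2. destruct (Nat.eqb_spec k j); auto. }
        unfold edge in *. rewrite Hsub. rewrite (graph_eta G'). simpl. rewrite Hv, Hx. reflexivity. }
      rewrite <- Heq in Hwf' |- *. apply hl_times_r; auto.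
  -
    intros G G2 A A' dG IHG Hiso Hteq Hwf G3 HFG.
    pose proof (FG_wf _ _ _ HFG Hwf) as Hwf3.
    pose proof (hl_deriv_wf _ _ dG) as (HwG & _ & _ & _).
    destruct Hiso as [G G2 f s Hv Hl Hfr Hfi Hsr Hsi Hatt Hext Hlab Hteql].
    destruct HFG as (Hv3 & Hx3 & pre & x & x' & post & E2 & E3 & Hfl).
    assert (Hk : length pre < length (gedges G)).
    { rewrite <- Hl. rewrite E2. rewrite length_app. simpl. lia. }
    destruct (inj_surj _ s Hsr Hsi _ Hk) as (k0 & Hk0 & Hsk0).
    destruct Hfl as (M & T & u & v & -> & HfM & ->).
    destruct (elab_mid G2 pre _ post E2) as [El2 Ea2]. simpl in El2, Ea2. unfold edge in *.
    destruct (elab G k0) as [x0|] eqn:Ex0.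
    2:{ exfalso. apply Hlab in Ex0; auto. rewrite Hsk0, El2 in Ex0. discriminate. }
    pose proof (Hteql k0 x0 (HTimes M) Hk0 Ex0 ltac:(rewrite Hsk0; auto)) as Htx.
    inversion Htx as [| |M0 M' HM0 Hx0eq HM']. subst x0 M'.
    pose proof (Hatt k0 Hk0) as Ha0. rewrite Hsk0, Ea2 in Ha0.
    destruct (eatt G k0) as [|u0 [|v0 [|w a0]]] eqn:Ea0; simpl in Ha0; try discriminate.
    injection Ha0 as Hu Hv0.
    pose proof HwG as HwG'.
    apply wf_graph_iff in HwG'. destruct HwG' as (_ & _ & Hes). rewrite Forall_idx in Hes.
    destruct (Hes k0 Hk0) as (Har & Hnd & Hlb). rewrite Ex0, Ea0 in Har, Hnd, Hlb. simpl in Har, Hnd, Hlb.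
    destruct Hlb as [HwM0 _]. apply wf_type_times in HwM0. destruct HwM0 as [_ HwM0].
    destruct (flip_iso M0 M T HM0 HwM0 HfM) as (T0 & HfM0 & HT0).
    destruct (nth_error_split _ _ (nth_elab G k0 Hk0)) as (pre0 & post0 & E0 & Hlen0).
    rewrite Ex0, Ea0 in E0.
    set (G1 := mkGraph (gnv G) (pre0 ++ (Some T0, [v0;u0]) :: post0) (gext G)).
    assert (HFG1 : FG G G1).
    { split; auto. split; auto. simpl. exists pre0, (Some (HTimes M0), [u0;v0]), (Some T0, [v0;u0]), post0.
      split; auto. split; auto. exists M0, T0, u0, v0. auto. }
    specialize (IHG G1 HFG1).
    apply hl_iso with G1 A; auto.
    assert (HlenG1 : length (gedges G1) = length (gedges G)).
    { simpl. rewrite E0. rewrite !length_app. simpl. lia. }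
    apply (giso_intro G1 G3 f s).
    + simpl. lia.
    + rewrite HlenG1. rewrite E3. rewrite <- Hl, E2. rewrite !length_app. simpl. lia.
    + simpl. auto.
    + simpl. auto.
    + rewrite HlenG1. auto.
    + rewrite HlenG1. auto.
    + rewrite HlenG1. intros i Hi. destruct (Nat.eq_dec i k0) as [->|Hne].
      * rewrite Hsk0. destruct (elab_mid G3 pre _ post E3) as [_ ->].
        rewrite <- Hlen0. destruct (elab_mid G1 pre0 _ post0 eq_refl) as [_ ->]. simpl. congruence.
      * assert (Hsne : s i <> length pre). { intros Hc. apply Hne. apply Hsi; auto. congruence. }
        destruct (elab_other G2 G3 pre _ _ post (s i) E2 E3 Hsne) as [_ ->].
        rewrite <- Hlen0 in Hne.
        destruct (elab_other G G1 pre0 _ _ post0 i E0 eq_refl Hne) as [_ ->]. auto.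
    + rewrite Hx3, Hext. reflexivity.
    + rewrite HlenG1. intros i Hi. destruct (Nat.eq_dec i k0) as [->|Hne].
      * rewrite Hsk0. destruct (elab_mid G3 pre _ post E3) as [-> _].
        rewrite <- Hlen0. destruct (elab_mid G1 pre0 _ post0 eq_refl) as [-> _]. simpl. split; discriminate.
      * assert (Hsne : s i <> length pre). { intros Hc. apply Hne. apply Hsi; auto. congruence. }
        destruct (elab_other G2 G3 pre _ _ post (s i) E2 E3 Hsne) as [-> _].
        rewrite <- Hlen0 in Hne.
        destruct (elab_other G G1 pre0 _ _ post0 i E0 eq_refl Hne) as [-> _]. auto.
    + rewrite HlenG1. intros i y1 y2 Hi Ey1 Ey2. destruct (Nat.eq_dec i k0) as [->|Hne].
      * rewrite Hsk0 in Ey2. destruct (elab_mid G3 pre _ post E3) as [El3 _]. rewrite El3 in Ey2.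
        rewrite <- Hlen0 in Ey1. destruct (elab_mid G1 pre0 _ post0 eq_refl) as [El1 _]. rewrite El1 in Ey1.
        simpl in Ey1, Ey2. injection Ey1 as <-. injection Ey2 as <-. auto.
      * assert (Hsne : s i <> length pre). { intros Hc. apply Hne. apply Hsi; auto. congruence. }
        destruct (elab_other G2 G3 pre _ _ post (s i) E2 E3 Hsne) as [El _]. rewrite El in Ey2.
        rewrite <- Hlen0 in Hne.
        destruct (elab_other G G1 pre0 _ _ post0 i E0 eq_refl Hne) as [El' _]. rewrite El' in Ey1.
        eauto.
Qed.

Lemma NoDup2 (a b : nat) : a <> b -> NoDup [a; b].
Proof. intros H. constructor. simpl. intros [E|[]]. auto. constructor. simpl; auto. constructor. Qed.

Ltac eok := unfold edge_ok; simpl; split; [intros ? [<-|[<-|[]]]; lia | split; [apply NoDup2; lia | try tauto; try (split; auto)]].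

Lemma trR_wf A : wf_type (trR A) /\ arity (trR A) = 2.
Proof.
  induction A as [x|B IHB A IHA|A IHA B IHB|A IHA B IHB|A IHA]; simpl trR.
  - simpl. auto.
  - destruct IHA as [WA AA], IHB as [WB AB]. split; [|reflexivity].
    apply wf_type_div. split; auto. split; [reflexivity|]. split; [rewrite AA; reflexivity|].
    apply wf_graph_iff. simpl. split. intros v [<-|[<-|[]]]; lia. split. apply NoDup2; lia.
    repeat (apply Forall_cons; [eok|]); apply Forall_nil.
  - destruct IHA as [WA AA], IHB as [WB AB]. split; [|reflexivity].
    apply wf_type_div. split; auto. split; [reflexivity|]. split; [rewrite AA; reflexivity|].
    apply wf_graph_iff. simpl. split. intros v [<-|[<-|[]]]; lia. split. apply NoDup2; lia.
    repeat (apply Forall_cons; [eok|]); apply Forall_nil.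
  - destruct IHA as [WA AA], IHB as [WB AB]. split; [|reflexivity].
    apply wf_type_times. split; [reflexivity|].
    apply wf_graph_iff. simpl. split. intros v [<-|[<-|[]]]; lia. split. apply NoDup2; lia.
    repeat (apply Forall_cons; [eok|]); apply Forall_nil.
  - destruct IHA as [WA AA]. split; [|reflexivity].
    apply wf_type_times. split; [reflexivity|].
    apply wf_graph_iff. simpl. split. intros v [<-|[<-|[]]]; lia. split. apply NoDup2; lia.
    repeat (apply Forall_cons; [eok|]); apply Forall_nil.
Qed.

Definition okT (p : HLtype * bool) : Prop := wf_type (fst p) /\ arity (fst p) = 2.

Lemma gs_edges_ok l : forall k n, (forall p, In p l -> okT p) -> k + length l < n ->
  Forall (edge_ok wf_type n) (gs_edges k l) /\ filter is_dollar (gs_edges k l) = [].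
Proof.
  induction l as [|[T d] l IH]; intros k n Hok Hlt; simpl in *.
  - split; auto.
  - destruct (IH (S k) n) as [A B]; auto. lia.
    destruct (Hok (T,d)) as [W Ar]; auto.
    split; [|exact B]. constructor; auto.
    destruct d; simpl; (split; [intros v [<-|[<-|[]]]; lia|split; [apply NoDup2; lia|split; auto]]).
Qed.

Lemma length_gs k l : length (gs_edges k l) = length l.
Proof. revert k. induction l as [|[T d] l IH]; intros k; simpl; auto. Qed.

Lemma gs_edges_app P : forall k R, gs_edges k (P ++ R) = gs_edges k P ++ gs_edges (k + length P) R.
Proof.
  induction P as [|[T d] P IH]; intros k R; simpl.
  - rewrite Nat.add_0_r. auto.
  - rewrite IH. replace (k + S (length P)) with (S k + length P) by lia. auto.
Qed.

Lemma gen_wf l T : l <> [] -> (forall p, In p l -> okT p) -> wf_type T -> arity T = 2 ->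
  wf_seq (gen_string l) T.
Proof.
  intros Hne Hok WT AT. destruct (gs_edges_ok l 0 (S (length l)) Hok ltac:(lia)) as [A B].
  split; [|split; [|split]]; auto.
  - apply wf_graph_iff. simpl. split. intros v [<-|[<-|[]]]; lia. split; auto.
    apply NoDup2. destruct l; simpl; [congruence|lia].
  - unfold count_dollar. simpl. rewrite B. reflexivity.
Qed.

Definition MB (B : ltype) : hgraph := mkGraph 2 [(Some (trR B), [1;0])] [0;1].

Lemma flip_MB B : flipgraph (MB B) (trR B).
Proof. split. reflexivity. exists 1, 0. simpl. repeat split; auto. Qed.

Definition br (p : ltype * bool) : HLtype * bool := (trR (bracket (fst p) (snd p)), false).
Definition fin (p : ltype * bool) : HLtype * bool := (trR (fst p), snd p).

Lemma okT_br p : okT (br p).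
Proof. apply trR_wf. Qed.
Lemma okT_fin p : okT (fin p).
Proof. apply trR_wf. Qed.

Lemma step_equiv P B rest C : (forall q, In q P -> okT q) -> (forall q, In q rest -> okT q) ->
  (hl_deriv (gen_string (P ++ (trR (LRev B), false) :: rest)) (trR C) <->
   hl_deriv (gen_string (P ++ (trR B, true) :: rest)) (trR C)).
Proof.
  intros HP HR.
  set (G1 := gen_string (P ++ (trR (LRev B), false) :: rest)).
  set (G2 := gen_string (P ++ (trR B, true) :: rest)).
  assert (E1 : gedges G1 = gs_edges 0 P ++ (Some (HTimes (MB B)), [length P; S (length P)]) :: gs_edges (S (length P)) rest).
  { unfold G1, gen_string. simpl. rewrite gs_edges_app. simpl. reflexivity. }
  assert (E2 : gedges G2 = gs_edges 0 P ++ (Some (trR B), [S (length P); length P]) :: gs_edges (S (length P)) rest).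
  { unfold G2, gen_string. simpl. rewrite gs_edges_app. simpl. reflexivity. }
  assert (Hv : gnv G2 = gnv G1). { unfold G1, G2, gen_string. simpl. rewrite !length_app. simpl. reflexivity. }
  assert (Hx : gext G2 = gext G1). { unfold G1, G2, gen_string. simpl. rewrite !length_app. simpl. reflexivity. }
  split.
  - intros d. apply (inversion G1); auto. split; auto. split; auto. rewrite E1, E2.
    eexists _, _, _, _. split; [reflexivity|]. split; [reflexivity|].
    exists (MB B), (trR B), (length P), (S (length P)). split; auto. split; auto. apply flip_MB.
  - intros d. pose proof (repl_flip G1 _ _ _ _ _ _ E1 (flip_MB B)) as Hr.
    rewrite length_gs in Hr. unfold edge in *.
    assert (HG2 : mkGraph (gnv G1) (gs_edges 0 P ++ (Some (trR B), [S (length P); length P]) :: gs_edges (S (length P)) rest) (gext G1) = G2).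
    { rewrite (graph_eta G2). rewrite Hv, Hx, E2. reflexivity. }
    assert (Hr' : repl G1 (length P) (MB B) = G2) by (rewrite Hr; exact HG2).
    apply hl_times_l with (MB B) (length P).
    + rewrite E1. rewrite length_app, length_gs. simpl. lia.
    + pose proof (elab_mid G1 _ _ _ E1) as [El _]. rewrite length_gs in El. exact El.
    + rewrite Hr'. exact d.
    + destruct (trR_wf C). apply gen_wf; auto.
      * destruct P; simpl; congruence.
      * intros q Hq. apply in_app_or in Hq. destruct Hq as [Hq|[<-|Hq]]; auto. apply trR_wf.
Qed.

Lemma chain C r : forall P, (forall q, In q P -> okT q) ->
  (hl_deriv (gen_string (P ++ map br r)) (trR C) <-> hl_deriv (gen_string (P ++ map fin r)) (trR C)).
Proof.
  induction r as [|[B d] r IH]; intros P HP; simpl.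
  - tauto.
  - destruct d.
    + transitivity (hl_deriv (gen_string (P ++ (trR B, true) :: map br r)) (trR C)).
      { apply step_equiv; auto. intros q Hq. apply in_map_iff in Hq. destruct Hq as (p & <- & _). apply okT_br. }
      change (fin (B, true)) with (trR B, true).
      replace (P ++ (trR B, true) :: map br r) with ((P ++ [(trR B, true)]) ++ map br r) by (rewrite <- app_assoc; auto).
      replace (P ++ (trR B, true) :: map fin r) with ((P ++ [(trR B, true)]) ++ map fin r) by (rewrite <- app_assoc; auto).
      apply IH. intros q Hq. apply in_app_or in Hq. destruct Hq as [Hq|[<-|[]]]; auto. apply trR_wf.
    + change (br (B, false)) with (trR B, false). change (fin (B, false)) with (trR B, false).
      replace (P ++ (trR B, false) :: map br r) with ((P ++ [(trR B, false)]) ++ map br r) by (rewrite <- app_assoc; auto).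
      replace (P ++ (trR B, false) :: map fin r) with ((P ++ [(trR B, false)]) ++ map fin r) by (rewrite <- app_assoc; auto).
      apply IH. intros q Hq. apply in_app_or in Hq. destruct Hq as [Hq|[<-|[]]]; auto. apply trR_wf.
Qed.

Theorem lemma2 (Gamma : list ltype) (C : ltype) :
  Gamma <> nil ->
  in_trR' Gamma C (trR_ant Gamma) (trR C) /\
  (forall (H : hgraph) (T : HLtype), in_trR' Gamma C H T ->
     (hl_deriv (trR_ant Gamma) (trR C) <-> hl_deriv H T)).
Proof.
  intros Hne. split.
  - exists (map (fun A => (A, false)) Gamma). split; [|split].
    + rewrite map_map. simpl. apply map_id.
    + unfold trR_ant. rewrite map_map. simpl. apply giso_refl.
    + apply teq_refl.
  - intros H T (l & Hl & Hiso & Hteq). subst Gamma.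
    assert (Ea : trR_ant (map (fun p => bracket (fst p) (snd p)) l) = gen_string ([] ++ map br l)).
    { unfold trR_ant. rewrite map_map. reflexivity. }
    rewrite Ea. rewrite chain by (simpl; tauto). simpl.
    change (map (fun p => (trR (fst p), snd p)) l) with (map fin l) in Hiso.
    set (G0 := gen_string (map fin l)) in *.
    assert (Hl0 : map fin l <> []). { destruct l; simpl in *; congruence. }
    destruct (trR_wf C) as [WC AC].
    assert (W0 : wf_seq G0 (trR C)).
    { apply gen_wf; auto. intros q Hq. apply in_map_iff in Hq. destruct Hq as (p & <- & _). apply okT_fin. }
    destruct W0 as (WG0 & CG0 & _ & AG0).
    split.
    + intros d. apply hl_iso with G0 (trR C); auto.
      destruct (proj1 wf_transfer _ _ Hteq WC) as [WT AT].
      destruct (proj2 wf_transfer _ _ Hiso WG0) as (WH & CH & LH & _).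
      split; auto. split. lia. split; auto. lia.
    + intros d. pose proof (hl_deriv_wf _ _ d) as (WH & CH & WT & AT).
      apply hl_iso with H T; auto.
      * apply giso_sym; auto.
      * apply teq_sym; auto.
      * split; auto.
Qed.
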